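(* For every positive integer $k$, there exists a digraph $G \in \mathcal{C}_3$ such that $\vec{\chi}(G) \geq k$.
   Context: All digraphs are finite and simple: no loops, no multiple arcs, and for two distinct vertices $u,v$ at most one of the arcs $uv$, $vu$ is present. A $k$-dicolouring of a digraph $D$ is a partition of $V(D)$ into $k$ sets $V_1,\dots,V_k$ (some possibly empty) such that each induced subdigraph $D[V_i]$ is acyclic (contains no directed cycle). The dichromatic number $\vec{\chi}(D)$ is the smallest $k$ such that $D$ admits a $k$-dicolouring. $TT_3$ denotes the transitive tournament on 3 vertices (a triangle oriented acyclically); a directed triangle is a directed cycle of length 3. $\mathcal{C}_3$ is the class of digraphs that contain no $TT_3$ as a subdigraph and contain no induced directed cycle of length at least $4$ (so every induced directed cycle is a directed triangle). *)

(* Defs.v *)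
From mathcomp Require Import all_boot.
Set Implicit Arguments. Unset Strict Implicit. Unset Printing Implicit Defensive.

Definition simple_digraph (T : finType) (e : rel T) : Prop :=
  (forall v, ~~ e v v) /\ (forall u v, ~~ (e u v && e v u)).

Definition dicycle (T : finType) (e : rel T) (s : seq T) : Prop :=
  [/\ 0 < size s, uniq s & cycle e s].

Definition acyclic_on (T : finType) (e : rel T) (A : {pred T}) : Prop :=
  forall s : seq T, {subset s <= A} -> ~ dicycle e s.

Definition dicolouring (T : finType) (e : rel T) (k : nat) (f : T -> 'I_k) : Prop :=
  forall i : 'I_k, acyclic_on e [pred x | f x == i].

Definition dicolourable (T : finType) (e : rel T) (k : nat) : Prop :=
  exists f : T -> 'I_k, dicolouring e f.

Definition dichromatic_ge (T : finType) (e : rel T) (k : nat) : Prop :=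
  forall j, j < k -> ~ dicolourable e j.

Definition has_TT3 (T : finType) (e : rel T) : Prop :=
  exists a b c : T, [/\ e a b, e b c & e a c].

Definition induced_dicycle (T : finType) (e : rel T) (s : seq T) : Prop :=
  dicycle e s /\ (forall x y, x \in s -> y \in s -> e x y -> y = next s x).

Definition in_C3 (T : finType) (e : rel T) : Prop :=
  ~ has_TT3 e /\ ~ (exists s : seq T, induced_dicycle e s /\ 4 <= size s).

(* Main.v *)
Require Import Defs.
From mathcomp Require Import all_boot zify.
Set Implicit Arguments. Unset Strict Implicit. Unset Printing Implicit Defensive.

Section Construction.
Variable N : nat.
Definition V := ('I_N * 'I_N * 'I_N)%type.
Definition p1 (x : V) : nat := x.1.1.
Definition p2 (x : V) : nat := x.1.2.
Definition p3 (x : V) : nat := x.2.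
Definition valid (x : V) := (p1 x < p2 x) && (p2 x < p3 x).
Definition arc : rel V := fun x y =>
  [&& valid x, valid y & ((p2 x == p1 y) && (p3 x == p2 y)) || (p1 x == p3 y)].

Lemma arc_simple : simple_digraph arc.
Proof.
split.
- move=> v; rewrite /arc /valid; lia.
- move=> u v; rewrite /arc /valid; lia.
Qed.

Lemma arc_noTT3 : ~ has_TT3 arc.
Proof.
move=> [a [b [c []]]]; rewrite /arc /valid; lia.
Qed.

Lemma seq_min (s : seq V) (key : V -> nat) : s != [::] ->
  exists2 x, x \in s & forall y, y \in s -> key x <= key y.
Proof.
elim: s => [//|a s IH] _.
case: s IH => [|b s] IH.
  by exists a => [|y]; rewrite ?inE // => /eqP ->.
have [x xin xmin] := IH isT.
case: (leqP (key a) (key x)) => H.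
- exists a; first by rewrite inE eqxx.
  move=> y; rewrite inE => /orP [/eqP -> //|/xmin]; exact: leq_trans.
- exists x; first by rewrite inE xin orbT.
  move=> y; rewrite inE => /orP [/eqP -> |/xmin //]; exact: ltnW.
Qed.

Lemma arc_noC4 : ~ (exists s : seq V, induced_dicycle arc s /\ 4 <= size s).
Proof.
move=> [s [[[s0 us cs] ind] sz]].
have sn : s != [::] by case: s s0 {us cs ind sz}.
have [x xin xmin] := seq_min p3 sn.
case: (rot_to xin) => i s' Hr.
have us2 : uniq (x :: s') by rewrite -Hr rot_uniq.
have cs2 : cycle arc (x :: s') by rewrite -Hr rot_cycle.
have sz2 : 4 <= size (x :: s') by rewrite -Hr size_rot.
have mem2 : forall v, (v \in x :: s') = (v \in s) by move=> v; rewrite -Hr mem_rot.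
have nx2 : forall v, next (x :: s') v = next s v by move=> v; rewrite -Hr next_rot.
case: s' Hr us2 cs2 sz2 mem2 nx2 => [|y [|z [|w r]]] //= Hr us2 cs2 _ mem2 nx2.
move: cs2 => /andP [exy /andP [eyz _]].
have yin : y \in s by rewrite -mem2 !inE eqxx !(orbT, orTb).
have zin : z \in s by rewrite -mem2 !inE eqxx !(orbT, orTb).
have hy := xmin y yin; have hz := xmin z zin.
have ezx : arc z x.
  move: exy eyz hy hz; rewrite /arc /valid; lia.
have := ind z x zin xin ezx.
rewrite -nx2 /=.
move: us2; rewrite /= !inE => /andP [Hx /andP [Hy /andP [Hz _]]].
have zx : (z == x) = false.
  by apply/negbTE; apply/eqP => E; move: Hx; rewrite E eqxx !(orbT, orTb).
have zy : (z == y) = false.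
  by apply/negbTE; apply/eqP => E; move: Hy; rewrite E eqxx !(orbT, orTb).
rewrite zx zy eqxx => E.
by move: Hx; rewrite E eqxx !(orbT, orTb).
Qed.

Lemma arc_C3 : in_C3 arc.
Proof. split; [exact: arc_noTT3 | exact: arc_noC4]. Qed.

End Construction.

Section Colour.
Variables (N k : nat) (f : V N -> 'I_k).
Hypothesis nomono : forall a b c d e : 'I_N, a < b -> b < c -> c < d -> d < e ->
   f (a,b,c) = f (b,c,d) -> f (b,c,d) = f (c,d,e) -> False.

Definition Sc (b c : 'I_N) : {set 'I_k} :=
  [set q | [exists a : 'I_N, (a < b) && (f (a,b,c) == q)]].
Definition Tc (c d : 'I_N) : {set 'I_k} :=
  [set q | [exists b : 'I_N, [&& b < c, f (b,c,d) == q & q \in Sc b c]]].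
Definition gc (c d : 'I_N) := (Sc c d, Tc c d).
Definition Uc (d : 'I_N) : {set ({set 'I_k} * {set 'I_k})} :=
  [set y | [exists c : 'I_N, (c < d) && (gc c d == y)]].

Lemma key (c d e : 'I_N) : c < d -> d < e -> gc c d = gc d e -> False.
Proof.
move=> cd de [HS HT].
have k1 : f (c,d,e) \in Sc d e.
  by rewrite inE; apply/existsP; exists c; rewrite cd eqxx.
have k2 : f (c,d,e) \in Tc d e.
  by rewrite inE; apply/existsP; exists c; rewrite cd eqxx HS k1.
move: k2; rewrite -HT inE => /existsP [b /and3P [bc /eqP fb]].
rewrite inE => /existsP [a /andP [ab /eqP fa]].
by apply: (nomono ab bc cd de); rewrite ?fa ?fb.
Qed.

Lemma Uc_lt (d e : 'I_N) : d < e -> Uc d != Uc e.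
Proof.
move=> de; apply/eqP => E.
have : gc d e \in Uc e by rewrite inE; apply/existsP; exists d; rewrite de eqxx.
rewrite -E inE => /existsP [c /andP [cd /eqP H]].
exact: (key cd de H).
Qed.

Lemma Uc_inj : injective Uc.
Proof.
move=> d e E; case: (ltngtP d e) => H.
- by move: (Uc_lt H); rewrite E eqxx.
- by move: (Uc_lt H); rewrite E eqxx.
- exact: val_inj.
Qed.

Lemma card_bound : N <= #|{set ({set 'I_k} * {set 'I_k})}|.
Proof. by rewrite -{1}(card_ord N); exact: leq_card Uc_inj. Qed.
End Colour.

Theorem theorem1 : forall k : nat, 0 < k ->
  exists (T : finType) (e : rel T),
    [/\ simple_digraph e, in_C3 e & dichromatic_ge e k].
Proof.
move=> k _.
pose N := #|{set ({set 'I_k} * {set 'I_k})}|.+1.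
exists (V N), (@arc N); split; [exact: arc_simple | exact: arc_C3 |].
move=> j jk [f hf].
pose f' (v : V N) : 'I_k := widen_ord (ltnW jk) (f v).
suff : N <= #|{set ({set 'I_k} * {set 'I_k})}| by rewrite ltnn.
apply: (card_bound (f:=f')) => a b c d e ab bc cd de E1 E2.
have F1 : f (a,b,c) = f (b,c,d) by apply: val_inj; move: E1 => /(congr1 val).
have F2 : f (b,c,d) = f (c,d,e) by apply: val_inj; move: E2 => /(congr1 val).
pose x : V N := (a,b,c); pose y : V N := (b,c,d); pose z : V N := (c,d,e).
apply: (hf (f x) [:: x; y; z]).
- move=> v; rewrite !inE => /or3P [] /eqP ->; rewrite /= ?inE /x /y /z ?F1 ?F2 //.
- split => //.
  + rewrite /= !inE; apply/andP; split.
      apply/norP; split; apply/eqP => H; move: (congr1 (@p1 N) H); rewrite /p1 /=; lia.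
    by rewrite andbT; apply/eqP => H; move: (congr1 (@p1 N) H); rewrite /p1 /=; lia.
  + rewrite /= /arc /valid /p1 /p2 /p3 /=; lia.
Qed.
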